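(* For every open continuous surjection $f:X\to Y$ between compact Hausdorff spaces, the map $OS(f):OS(X)\to OS(Y)$ is open.
   Context: All spaces are compact Hausdorff and all maps continuous. For a compactum $X$, $C(X)$ is the Banach space of continuous real functions on $X$ with the sup-norm, $c_X$ the constant function with value $c$. Let $V(X)=\prod_{\varphi\in C(X)}[\min\varphi,\max\varphi]$ with the product topology. A functional $\nu:C(X)\to\mathbb{R}$ is: normed if $\nu(1_X)=1$; weakly additive if $\nu(\varphi+c_X)=\nu(\varphi)+c$; order-preserving if $\varphi\le\psi$ implies $\nu(\varphi)\le\nu(\psi)$; positively homogeneous if $\nu(t\varphi)=t\nu(\varphi)$ for $t\ge0$; semiadditive if $\nu(\varphi+\psi)\le\nu(\varphi)+\nu(\psi)$. $OS(X)\subset V(X)$ is the subspace of functionals satisfying all five properties. For $f:X\to Y$, $OS(f)(\nu)(\varphi)=\nu(\varphi\circ f)$ for $\varphi\in C(Y)$. *)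

(* Defs.v *)
From Stdlib Require Import Reals Lra List Classical FunctionalExtensionality.
Open Scope R_scope.

Record Top := {
  carrier :> Type;
  is_open : (carrier -> Prop) -> Prop;
  open_full : is_open (fun _ => True);
  open_inter : forall U V, is_open U -> is_open V -> is_open (fun x => U x /\ V x);
  open_union : forall F : (carrier -> Prop) -> Prop,
      (forall U, F U -> is_open U) -> is_open (fun x => exists U, F U /\ U x)
}.

Definition top_compact (X : Top) : Prop :=
  forall F : (X -> Prop) -> Prop,
    (forall U, F U -> is_open X U) ->
    (forall x, exists U, F U /\ U x) ->
    exists l : list (X -> Prop),
      (forall U, In U l -> F U) /\ (forall x, exists U, In U l /\ U x).

Definition top_hausdorff (X : Top) : Prop :=
  forall x y : X, x <> y ->
    exists U V, is_open X U /\ is_open X V /\ U x /\ V y /\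
      (forall z, ~ (U z /\ V z)).

Definition top_continuous {X Y : Top} (f : X -> Y) : Prop :=
  forall V, is_open Y V -> is_open X (fun x => V (f x)).

Definition open_map {X Y : Top} (f : X -> Y) : Prop :=
  forall U, is_open X U -> is_open Y (fun y => exists x, U x /\ f x = y).

Definition top_surjective {X Y : Type} (f : X -> Y) : Prop := forall y, exists x, f x = y.

Definition R_open (U : R -> Prop) : Prop :=
  forall x, U x -> exists eps, 0 < eps /\ forall y, Rabs (y - x) < eps -> U y.

Definition cont_real {X : Top} (phi : X -> R) : Prop :=
  forall V, R_open V -> is_open X (fun x => V (phi x)).

Definition C (X : Top) : Type := { phi : X -> R | cont_real phi }.
Definition Cfun {X : Top} (phi : C X) : X -> R := proj1_sig phi.
Coercion Cfun : C >-> Funclass.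

(* Functionals on C(X); V(X) membership: inf phi <= nu phi <= sup phi
   (on compact X these are min and max). *)
Definition in_V {X : Top} (nu : C X -> R) : Prop :=
  forall phi : C X,
    (forall t, (forall x, t <= phi x) -> t <= nu phi) /\
    (forall t, (forall x, phi x <= t) -> nu phi <= t).

Definition normed {X : Top} (nu : C X -> R) : Prop :=
  forall one : C X, (forall x, one x = 1) -> nu one = 1.

Definition weakly_additive {X : Top} (nu : C X -> R) : Prop :=
  forall (phi psi : C X) (c : R), (forall x, psi x = phi x + c) -> nu psi = nu phi + c.

Definition order_preserving {X : Top} (nu : C X -> R) : Prop :=
  forall phi psi : C X, (forall x, phi x <= psi x) -> nu phi <= nu psi.

Definition pos_homogeneous {X : Top} (nu : C X -> R) : Prop :=
  forall (phi psi : C X) (t : R), 0 <= t -> (forall x, psi x = t * phi x) ->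
    nu psi = t * nu phi.

Definition semiadditive {X : Top} (nu : C X -> R) : Prop :=
  forall phi psi chi : C X, (forall x, chi x = phi x + psi x) ->
    nu chi <= nu phi + nu psi.

Definition in_OS {X : Top} (nu : C X -> R) : Prop :=
  in_V nu /\ normed nu /\ weakly_additive nu /\ order_preserving nu /\
  pos_homogeneous nu /\ semiadditive nu.

(* Open subsets of OS(X) for the subspace topology of the product topology
   on V(X) (equivalently of R^{C(X)}): every point of W in OS(X) has a basic
   product neighbourhood (finitely many coordinates) whose trace on OS(X)
   lies in W. *)
Definition OS_open (X : Top) (W : (C X -> R) -> Prop) : Prop :=
  forall nu, in_OS nu -> W nu ->
    exists l : list (C X * R),
      (forall p, In p l -> 0 < snd p) /\
      forall mu, in_OS mu ->
        (forall p, In p l -> Rabs (mu (fst p) - nu (fst p)) < snd p) -> W mu.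

Lemma cont_real_comp {X Y : Top} (f : X -> Y) (hf : top_continuous f) (phi : C Y) :
  cont_real (fun x => phi (f x)).
Proof.
  intros V HV. destruct phi as [phi hphi]; simpl.
  exact (hf _ (hphi V HV)).
Qed.

Definition Ccomp {X Y : Top} (f : X -> Y) (hf : top_continuous f) (phi : C Y) : C X :=
  exist _ (fun x => phi (f x)) (cont_real_comp f hf phi).

Definition OSmap {X Y : Top} (f : X -> Y) (hf : top_continuous f) (nu : C X -> R) : C Y -> R :=
  fun phi => nu (Ccomp f hf phi).

Definition OS_open_map {X Y : Top} (f : X -> Y) (hf : top_continuous f) : Prop :=
  forall W, OS_open X W ->
    OS_open Y (fun mu => exists nu, in_OS nu /\ W nu /\ mu = OSmap f hf nu).

(* Main.v *)
From Pilot Require Import Defs.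
From Stdlib Require Import Reals Lra List Classical ClassicalEpsilon FunctionalExtensionality PropExtensionality Lia.
Import Pilot.Defs.
Open Scope R_scope.

Lemma open_ext (X:Top) (U V : X -> Prop) : is_open X U -> (forall x, U x <-> V x) -> is_open X V.
Proof. intros H E. replace V with U; auto. extensionality x. apply propositional_extensionality. apply E. Qed.

Lemma open_local (X:Top) (U : X -> Prop) :
  (forall x, U x -> exists V, is_open X V /\ V x /\ forall z, V z -> U z) -> is_open X U.
Proof.
  intros H.
  apply open_ext with (fun x => exists V, (is_open X V /\ forall z, V z -> U z) /\ V x).
  - apply open_union. intros V [HV _]; exact HV.
  - intros x; split.
    + intros [V [[_ HVU] HVx]]. auto.
    + intros Hx. destruct (H x Hx) as [V [HV [HVx HVU]]]. exists V. auto.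
Qed.

Definition loc_cont (X:Top) (h : X -> R) := forall x e, 0 < e ->
  exists U, is_open X U /\ U x /\ forall z, U z -> Rabs (h z - h x) < e.

Lemma ball_open a e : R_open (fun y => Rabs (y - a) < e).
Proof. intros x Hx. exists (e - Rabs (x - a)). split. lra. intros y Hy.
  replace (y - a) with ((y - x) + (x - a)) by ring.
  pose proof (Rabs_triang (y-x) (x-a)). lra. Qed.

Lemma cont_loc (X:Top) (h : X -> R) : cont_real h -> loc_cont X h.
Proof. intros H x e He. exists (fun z => Rabs (h z - h x) < e). split.
  apply (H _ (ball_open (h x) e)). split. rewrite Rminus_diag, Rabs_R0; lra. auto. Qed.

Lemma loc_cont_real (X:Top) (h : X -> R) : loc_cont X h -> cont_real h.
Proof. intros H V HV. apply open_local. intros x Hx. destruct (HV _ Hx) as [e [He HB]].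
 destruct (H x e He) as [U [HU [HUx HUz]]]. exists U. split; auto. Qed.

Lemma loc_const (X:Top) a : loc_cont X (fun _ => a).
Proof. intros x e He. exists (fun _ => True). split. apply open_full. split. auto.
  intros. rewrite Rminus_diag, Rabs_R0; lra. Qed.

Lemma loc_add (X:Top) g h : loc_cont X g -> loc_cont X h -> loc_cont X (fun x => g x + h x).
Proof. intros Hg Hh x e He.
  destruct (Hg x (e/2)) as [U [HU [HUx HUz]]]. lra.
  destruct (Hh x (e/2)) as [V [HV [HVx HVz]]]. lra.
  exists (fun z => U z /\ V z). split. apply open_inter; auto. split. auto.
  intros z [Hz1 Hz2]. specialize (HUz z Hz1). specialize (HVz z Hz2).
  replace (g z + h z - (g x + h x)) with ((g z - g x) + (h z - h x)) by ring.
  pose proof (Rabs_triang (g z - g x) (h z - h x)). lra. Qed.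

Lemma loc_scale (X:Top) t g : loc_cont X g -> loc_cont X (fun x => t * g x).
Proof. intros Hg x e He.
  assert (Ha : 0 < Rabs t + 1) by (pose proof (Rabs_pos t); lra).
  destruct (Hg x (e/(Rabs t + 1))) as [U [HU [HUx HUz]]]. apply Rdiv_lt_0_compat; lra.
  exists U. split; auto. split; auto. intros z Hz. specialize (HUz z Hz).
  replace (t * g z - t * g x) with (t * (g z - g x)) by ring. rewrite Rabs_mult.
  set (d := Rabs (g z - g x)) in *. pose proof (Rabs_pos t). pose proof (Rabs_pos (g z - g x)).
  assert (d * (Rabs t + 1) < e).
  { apply Rmult_lt_reg_r with (/(Rabs t + 1)). apply Rinv_0_lt_compat; lra.
    rewrite Rmult_assoc, Rinv_r by lra. rewrite Rmult_1_r. exact HUz. }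
  fold d in H0. nra. Qed.

Definition cconst (X:Top) (a:R) : C X := exist _ (fun _ => a) (loc_cont_real _ _ (loc_const X a)).
Definition cadd {X:Top} (g h : C X) : C X :=
  exist _ (fun x => g x + h x) (loc_cont_real _ _ (loc_add X _ _ (cont_loc _ _ (proj2_sig g)) (cont_loc _ _ (proj2_sig h)))).
Definition cscale {X:Top} (t:R) (g : C X) : C X :=
  exist _ (fun x => t * g x) (loc_cont_real _ _ (loc_scale X t _ (cont_loc _ _ (proj2_sig g)))).

Lemma cconst_eq (X:Top) a x : cconst X a x = a. Proof. reflexivity. Qed.
Lemma cadd_eq (X:Top) (g h : C X) x : cadd g h x = g x + h x. Proof. reflexivity. Qed.
Lemma cscale_eq (X:Top) t (g : C X) x : cscale t g x = t * g x. Proof. reflexivity. Qed.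

Lemma list_bound (X:Top) (g : X->R) (l : list (X->Prop)) :
  (forall U, In U l -> exists x0, U = (fun x => Rabs (g x - g x0) < 1)) ->
  exists B, forall U, In U l -> forall x, U x -> Rabs (g x) <= B.
Proof.
  induction l as [|a l IH]; intros H; simpl.
  - exists 0. tauto.
  - destruct IH as [B HB]. intros; apply H; simpl; auto.
    destruct (H a (or_introl eq_refl)) as [x0 Hx0].
    exists (Rmax B (Rabs (g x0) + 1)). intros U [<-|HU] x Hx.
    + subst a. pose proof (Rabs_triang (g x - g x0) (g x0)).
      replace (g x - g x0 + g x0) with (g x) in H0 by ring.
      pose proof (Rmax_r B (Rabs (g x0) + 1)). lra.
    + pose proof (HB U HU x Hx). pose proof (Rmax_l B (Rabs (g x0) + 1)). lra.
Qed.

Lemma cont_bounded (X:Top) (hX : top_compact X) (g : X -> R) : cont_real g ->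
  exists B, forall x, Rabs (g x) <= B.
Proof.
  intros Hg.
  destruct (hX (fun U => exists x0, U = (fun x => Rabs (g x - g x0) < 1))) as [l [Hl Hcov]].
  - intros U [x0 ->]. apply (Hg _ (ball_open (g x0) 1)).
  - intros x. exists (fun z => Rabs (g z - g x) < 1). split. eauto.
    rewrite Rminus_diag, Rabs_R0; lra.
  - destruct (list_bound X g l Hl) as [B HB]. exists B. intros x.
    destruct (Hcov x) as [U [HU HUx]]. eauto.
Qed.

Lemma C_bounded (X:Top) (hX : top_compact X) (g : C X) : exists B, forall x, Rabs (g x) <= B.
Proof. apply cont_bounded; auto. exact (proj2_sig g). Qed.
Lemma abs_le_split a b : Rabs a <= b -> -b <= a <= b.
Proof. intros H. pose proof (Rle_abs a). pose proof (Rle_abs (-a)). rewrite Rabs_Ropp in H1. lra. Qed.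

Definition lubR (E : R -> Prop) : R := epsilon (inhabits 0) (fun m => is_lub E m).
Lemma lubR_spec E : bound E -> (exists x, E x) -> is_lub E (lubR E).
Proof. intros H1 H2. unfold lubR. apply epsilon_spec.
  destruct (completeness E H1 H2) as [m Hm]. eauto. Qed.

Definition good {X Y : Top} (f : X -> Y) := top_compact X /\ top_hausdorff Y /\
  top_continuous f /\ open_map f /\ top_surjective f.

Definition fibmax {X Y : Top} (f : X -> Y) (g : X -> R) (y : Y) : R :=
  lubR (fun v => exists x, f x = y /\ v = g x).

Lemma fibmax_spec {X Y : Top} (f : X -> Y) (g : X -> R) y :
  top_surjective f -> (exists B, forall x, Rabs (g x) <= B) ->
  is_lub (fun v => exists x, f x = y /\ v = g x) (fibmax f g y).
Proof. intros Hs [B HB]. apply lubR_spec.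
  - exists B. intros v [x [_ ->]]. pose proof (HB x). pose proof (Rle_abs (g x)). lra.
  - destruct (Hs y) as [x Hx]. eauto.
Qed.

Lemma fibmax_ge {X Y : Top} (f : X -> Y) (G : good f) (g : C X) x y :
  f x = y -> g x <= fibmax f g y.
Proof. intros Hx. destruct G as [hX [_ [_ [_ hs]]]].
  destruct (fibmax_spec f g y hs (C_bounded X hX g)) as [H1 _]. apply H1. eauto. Qed.

Lemma fibmax_le {X Y : Top} (f : X -> Y) (G : good f) (g : C X) y a :
  (forall x, f x = y -> g x <= a) -> fibmax f g y <= a.
Proof. intros Hx. destruct G as [hX [_ [_ [_ hs]]]].
  destruct (fibmax_spec f g y hs (C_bounded X hX g)) as [_ H2]. apply H2.
  intros v [x [Hfx ->]]. auto. Qed.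

Lemma fibmax_approx {X Y : Top} (f : X -> Y) (G : good f) (g : C X) y e :
  0 < e -> exists x, f x = y /\ fibmax f g y - e < g x.
Proof. intros He. destruct (classic (exists x, f x = y /\ fibmax f g y - e < g x)) as [H|H]; auto.
  exfalso. assert (fibmax f g y <= fibmax f g y - e); [|lra].
  apply fibmax_le; auto. intros x Hx. apply Rnot_lt_le. intros Hc. apply H. eauto. Qed.

Lemma halfline_open a : R_open (fun v => a < v).
Proof. intros x Hx. exists (x - a). split. lra. intros y Hy.
  pose proof (Rle_abs (x - y)). rewrite Rabs_minus_sym in Hy. lra. Qed.

Lemma upper_nbhd {X Y : Top} (f : X -> Y) (hX: top_compact X) (hYH: top_hausdorff Y)
  (hf: top_continuous f) (O : X -> Prop) (y0 : Y) :
  is_open X O -> (forall x, f x = y0 -> O x) ->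
  exists W, is_open Y W /\ W y0 /\ forall x, W (f x) -> O x.
Proof.
  intros HO Hfib.
  set (F := fun U : X -> Prop => is_open X U /\ ((forall x, U x -> O x) \/
         exists V, is_open Y V /\ V y0 /\ forall x, U x -> ~ V (f x))).
  destruct (hX F) as [L [HL Hcov]].
  - intros U [HU _]; exact HU.
  - intros x. destruct (classic (f x = y0)) as [E|E].
    + exists O. split. split; auto. auto.
    + destruct (hYH (f x) y0 E) as [U' [V [HU' [HV [HU'x [HVy Hdis]]]]]].
      exists (fun z => U' (f z)). split; auto. split. apply hf; auto.
      right. exists V. split; auto. split; auto. intros z Hz HVz. apply (Hdis (f z)). auto.
  - assert (Hch : exists W, is_open Y W /\ W y0 /\ forall U, In U L ->
        (forall x, U x -> O x) \/ (forall x, U x -> ~ W (f x))).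
    { clear Hcov. induction L as [|a L IH].
      - exists (fun _ => True). split. apply open_full. simpl; tauto.
      - destruct IH as [W [HW [HWy HWL]]]. intros; apply HL; simpl; auto.
        destruct (HL a (or_introl eq_refl)) as [_ [Ha|[V [HV [HVy HaV]]]]].
        + exists W. split; auto. split; auto. intros U [<-|HU]; auto.
        + exists (fun y => W y /\ V y). split. apply open_inter; auto. split; auto.
          intros U [<-|HU].
          * right. intros x Hx [_ Hv]. apply (HaV x Hx Hv).
          * destruct (HWL U HU) as [H|H]; auto. right. intros x Hx [Hw _]. apply (H x Hx Hw). }
    destruct Hch as [W [HW [HWy HWL]]]. exists W. split; auto. split; auto.
    intros x Hx. destruct (Hcov x) as [U [HU HUx]].
    destruct (HWL U HU) as [H|H]. auto. exfalso. apply (H x HUx Hx).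
Qed.

Lemma fibmax_loc {X Y : Top} (f : X -> Y) (G : good f) (g : C X) : loc_cont Y (fibmax f g).
Proof.
  intros y0 e He. pose proof G as G'. destruct G' as [hX [hYH [hf [ho hs]]]].
  set (a := fibmax f g y0).
  assert (Hg := proj2_sig g). simpl in Hg. fold (Cfun g) in Hg.
  destruct (upper_nbhd f hX hYH hf (fun x => g x < a + e/2) y0) as [W [HW [HWy HWx]]].
  - apply open_ext with (fun x => (fun v => Rabs (v - a) < e/2 \/ v < a) (g x)).
    + apply (Hg (fun v => Rabs (v - a) < e/2 \/ v < a)). intros v Hv. destruct Hv as [Hv|Hv].
      * destruct (ball_open a (e/2) v Hv) as [d [Hd Hdd]]. exists d. split; auto.
      * exists (a - v). split. lra. intros z Hz. right. pose proof (Rle_abs (z - v)). lra.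
    + intros x. split.
      * intros [Hx|Hx]. pose proof (Rle_abs (g x - a)). lra. lra.
      * intros Hx. destruct (Rlt_or_le (g x) a). auto. left. rewrite Rabs_right; lra.
  - intros x Hx. pose proof (fibmax_ge f G g x y0 Hx). fold a in H. lra.
  - destruct (fibmax_approx f G g y0 e He) as [x0 [Hx0 Hgx0]]. fold a in Hgx0.
    set (U1 := fun y => exists x, (fun x => a - e < g x) x /\ f x = y).
    assert (HU1 : is_open Y U1). { apply ho. apply (Hg _ (halfline_open (a - e))). }
    exists (fun y => U1 y /\ W y). split. apply open_inter; auto. split. split; auto.
    exists x0. auto.
    intros z [[x [Hx1 Hx2]] Hz]. apply Rabs_def1.
    + assert (fibmax f g z <= a + e/2); [|lra]. apply fibmax_le; auto.
      intros x' Hx'. apply Rlt_le. apply HWx. rewrite Hx'. auto.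
    + pose proof (fibmax_ge f G g x z Hx2). lra.
Qed.

Definition fibmaxC {X Y : Top} {f : X -> Y} (G : good f) (g : C X) : C Y :=
  exist _ (fibmax f g) (loc_cont_real _ _ (fibmax_loc f G g)).
Definition fibminC {X Y : Top} {f : X -> Y} (G : good f) (g : C X) : C Y :=
  cscale (-1) (fibmaxC G (cscale (-1) g)).

Lemma fibmaxC_ge {X Y : Top} (f : X -> Y) (G : good f) (g : C X) x : g x <= fibmaxC G g (f x).
Proof. apply (fibmax_ge f G g x (f x) eq_refl). Qed.
Lemma fibmaxC_le {X Y : Top} (f : X -> Y) (G : good f) (g : C X) y a :
  (forall x, f x = y -> g x <= a) -> fibmaxC G g y <= a.
Proof. apply (fibmax_le f G). Qed.
Lemma fibminC_le {X Y : Top} (f : X -> Y) (G : good f) (g : C X) x : fibminC G g (f x) <= g x.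
Proof. unfold fibminC. rewrite cscale_eq. pose proof (fibmaxC_ge f G (cscale (-1) g) x).
  rewrite cscale_eq in H. lra. Qed.
Lemma fibminC_ge {X Y : Top} (f : X -> Y) (G : good f) (g : C X) y a :
  (forall x, f x = y -> a <= g x) -> a <= fibminC G g y.
Proof. intros H. unfold fibminC. rewrite cscale_eq.
  assert (fibmaxC G (cscale (-1) g) y <= - a); [|lra].
  apply fibmaxC_le. intros x Hx. rewrite cscale_eq. specialize (H x Hx). lra. Qed.

Lemma fibmaxC_lip {X Y : Top} (f : X -> Y) (G : good f) (g h : C X) eta :
  (forall x, Rabs (g x - h x) <= eta) -> forall y, Rabs (fibmaxC G g y - fibmaxC G h y) <= eta.
Proof. intros H y. apply Rabs_le. split.
  - assert (fibmaxC G h y <= fibmaxC G g y + eta); [|lra]. apply fibmaxC_le. intros x Hx.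
    pose proof (fibmaxC_ge f G g x). rewrite Hx in H0. pose proof (H x). apply abs_le_split in H1. lra.
  - assert (fibmaxC G g y <= fibmaxC G h y + eta); [|lra]. apply fibmaxC_le. intros x Hx.
    pose proof (fibmaxC_ge f G h x). rewrite Hx in H0. pose proof (H x). apply abs_le_split in H1. lra.
Qed.

Lemma fibminC_lip {X Y : Top} (f : X -> Y) (G : good f) (g h : C X) eta :
  (forall x, Rabs (g x - h x) <= eta) -> forall y, Rabs (fibminC G g y - fibminC G h y) <= eta.
Proof. intros H y. unfold fibminC. rewrite !cscale_eq.
  replace (-1 * fibmaxC G (cscale (-1) g) y - -1 * fibmaxC G (cscale (-1) h) y) with
    (- (fibmaxC G (cscale (-1) g) y - fibmaxC G (cscale (-1) h) y)) by ring.
  rewrite Rabs_Ropp. apply fibmaxC_lip. intros x. rewrite !cscale_eq.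
  replace (-1 * g x - -1 * h x) with (- (g x - h x)) by ring. rewrite Rabs_Ropp. auto. Qed.
Lemma os_const (X:Top) (nu : C X -> R) : in_OS nu -> forall a, nu (cconst X a) = a.
Proof. intros [_ [Hn [Hw _]]] a.
  rewrite (Hw (cconst X 1) (cconst X a) (a - 1)). rewrite (Hn (cconst X 1)); auto. ring.
  intros; rewrite !cconst_eq; ring. Qed.

Lemma os_mono (X:Top) (nu : C X -> R) : in_OS nu -> forall a b : C X, (forall x, a x <= b x) -> nu a <= nu b.
Proof. intros [_ [_ [_ [Ho _]]]]. auto. Qed.

Lemma os_shift (X:Top) (nu : C X -> R) : in_OS nu -> forall (a b : C X) c, (forall x, b x = a x + c) -> nu b = nu a + c.
Proof. intros [_ [_ [Hw _]]]. auto. Qed.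

Lemma os_hom (X:Top) (nu : C X -> R) : in_OS nu -> forall (a b : C X) t, 0 <= t -> (forall x, b x = t * a x) -> nu b = t * nu a.
Proof. intros [_ [_ [_ [_ [Hh _]]]]]. auto. Qed.

Lemma os_le_add (X:Top) (nu : C X -> R) : in_OS nu -> forall a b c : C X, (forall x, a x <= b x + c x) -> nu a <= nu b + nu c.
Proof. intros H a b c Hx. pose proof H as [_ [_ [_ [_ [_ Hs]]]]].
  apply Rle_trans with (nu (cadd b c)). apply (os_mono X nu H). intros; rewrite cadd_eq; auto.
  apply Hs. intros; rewrite cadd_eq; auto. Qed.

Lemma os_lip (X:Top) (nu : C X -> R) : in_OS nu -> forall (a b : C X) eta, (forall x, Rabs (a x - b x) <= eta) -> Rabs (nu a - nu b) <= eta.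
Proof. intros H a b eta Hx. apply Rabs_le. split.
  - assert (nu b <= nu a + eta); [|lra].
    rewrite <- (os_shift X nu H a (cadd a (cconst X eta)) eta) by (intros; rewrite cadd_eq, cconst_eq; auto).
    apply (os_mono X nu H). intros x. rewrite cadd_eq, cconst_eq. pose proof (abs_le_split _ _ (Hx x)). lra.
  - assert (nu a <= nu b + eta); [|lra].
    rewrite <- (os_shift X nu H b (cadd b (cconst X eta)) eta) by (intros; rewrite cadd_eq, cconst_eq; auto).
    apply (os_mono X nu H). intros x. rewrite cadd_eq, cconst_eq. pose proof (abs_le_split _ _ (Hx x)). lra.
Qed.

Fixpoint sumR (n : nat) (F : nat -> R) : R := match n with O => 0 | S k => sumR k F + F k end.

Lemma sumR_ext n F G : (forall i, (i < n)%nat -> F i = G i) -> sumR n F = sumR n G.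
Proof. induction n; simpl; intros H; auto. rewrite IHn, H; [auto|lia|]. intros; apply H; lia. Qed.
Lemma sumR_add n F G : sumR n (fun i => F i + G i) = sumR n F + sumR n G.
Proof. induction n; simpl. ring. rewrite IHn. ring. Qed.
Lemma sumR_scal n a F : sumR n (fun i => a * F i) = a * sumR n F.
Proof. induction n; simpl. ring. rewrite IHn. ring. Qed.
Lemma sumR_le n F G : (forall i, (i < n)%nat -> F i <= G i) -> sumR n F <= sumR n G.
Proof. induction n; simpl; intros H. lra. pose proof (H n (Nat.lt_succ_diag_r n)).
  assert (sumR n F <= sumR n G) by (apply IHn; intros; apply H; lia). lra. Qed.
Lemma sumR_abs n F : Rabs (sumR n F) <= sumR n (fun i => Rabs (F i)).
Proof. induction n; simpl. rewrite Rabs_R0; lra. pose proof (Rabs_triang (sumR n F) (F n)). lra. Qed.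
Lemma sumR_const n a : sumR n (fun _ => a) = INR n * a.
Proof. induction n. simpl; ring. cbn [sumR]. rewrite IHn, S_INR. ring. Qed.
Lemma sumR_nonneg n F : (forall i, (i < n)%nat -> 0 <= F i) -> 0 <= sumR n F.
Proof. intros H. rewrite <- (Rmult_0_r (INR n)). rewrite <- sumR_const. apply sumR_le. auto. Qed.
Lemma sumR_elem n F i : (forall j, (j < n)%nat -> 0 <= F j) -> (i < n)%nat -> F i <= sumR n F.
Proof. induction n; simpl; intros H Hi. lia.
  destruct (Nat.eq_dec i n) as [->|E].
  - pose proof (sumR_nonneg n F (fun j Hj => H j (Nat.lt_lt_succ_r _ _ Hj))). lra.
  - pose proof (IHn (fun j Hj => H j (Nat.lt_lt_succ_r _ _ Hj)) ltac:(lia)). pose proof (H n ltac:(lia)). lra. Qed.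
Lemma sumR_delta n F i : (i < n)%nat -> sumR n (fun j => (if Nat.eqb j i then 1 else 0) * F j) = F i.
Proof. induction n; simpl; intros Hi. lia.
  destruct (Nat.eq_dec i n) as [->|E].
  - rewrite Nat.eqb_refl. rewrite (sumR_ext n _ (fun _ => 0)). rewrite sumR_const. ring.
    intros j Hj. destruct (Nat.eqb_spec j n). lia. ring.
  - rewrite IHn by lia. destruct (Nat.eqb_spec n i). lia. ring. Qed.

Definition gf {X:Top} (Phi : nat -> C X) (k : nat) (u : nat -> R) (x : X) : R :=
  sumR k (fun i => u i * Phi i x).
Lemma gf_loc (X:Top) (Phi : nat -> C X) k u : loc_cont X (gf Phi k u).
Proof. induction k; unfold gf; simpl. apply loc_const.
  apply (loc_add X (fun x => sumR k (fun i => u i * Phi i x)) (fun x => u k * Phi k x)). exact IHk.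
  apply loc_scale. apply cont_loc. exact (proj2_sig (Phi k)). Qed.
Definition gC {X:Top} (Phi : nat -> C X) (k : nat) (u : nat -> R) : C X :=
  exist _ (gf Phi k u) (loc_cont_real _ _ (gf_loc X Phi k u)).
Lemma gC_eq (X:Top) Phi k u (x:X) : gC Phi k u x = gf Phi k u x. Proof. reflexivity. Qed.

Lemma nu_gC (X:Top) (nu : C X -> R) (Phi : nat -> C X) k u : in_OS nu ->
  (forall i, (i < k)%nat -> 0 <= u i) -> nu (gC Phi k u) <= sumR k (fun i => u i * nu (Phi i)).
Proof. intros H. induction k; intros Hu; simpl.
  - rewrite <- (os_const X nu H 0). right. apply Rle_antisym; apply (os_mono X nu H); intros; simpl; unfold gf; simpl; lra.
  - apply Rle_trans with (nu (gC Phi k u) + nu (cscale (u k) (Phi k))).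
    + apply (os_le_add X nu H). intros x. rewrite cscale_eq, !gC_eq. unfold gf. simpl. lra.
    + rewrite (os_hom X nu H (Phi k) (cscale (u k) (Phi k)) (u k)); auto.
      assert (nu (gC Phi k u) <= sumR k (fun i => u i * nu (Phi i))) by (apply IHk; intros; apply Hu; lia). lra.
Qed.

Lemma floor_nat m y : 0 <= y <= INR m -> exists j, (j <= m)%nat /\ INR j <= y <= INR j + 1.
Proof. induction m; intros Hy.
  - exists 0%nat. simpl in *. split. lia. lra.
  - rewrite S_INR in Hy. destruct (Rle_lt_dec y (INR m)).
    + destruct IHm as [j [Hj Hjy]]. lra. exists j. split. lia. auto.
    + exists m. split. lia. lra. Qed.

Lemma round01 (N : nat) x : (0 < N)%nat -> 0 <= x <= 1 ->
  exists j, (j <= N)%nat /\ Rabs (x - INR j / INR N) <= 1 / INR N.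
Proof. intros HN Hx. assert (HNr : 0 < INR N) by (apply lt_0_INR; auto).
  destruct (floor_nat N (x * INR N)) as [j [Hj Hjy]]. nra.
  exists j. split; auto.
  replace (x - INR j / INR N) with ((x * INR N - INR j) / INR N) by (field; lra).
  unfold Rdiv. rewrite Rabs_mult. rewrite (Rabs_right (/ INR N)).
  2: { apply Rle_ge. left. apply Rinv_0_lt_compat; auto. }
  apply Rmult_le_compat_r. left. apply Rinv_0_lt_compat; auto.
  apply Rabs_le. lra. Qed.

Fixpoint grid (N : nat) (k : nat) : list (nat -> R) :=
  match k with
  | O => (fun _ => 0) :: nil
  | S k' => flat_map (fun u => map (fun j => fun i => if Nat.eqb i k' then INR j / INR N else u i)
                                  (seq 0 (S N))) (grid N k')
  end.

Lemma grid_approx (N : nat) k u : (0 < N)%nat -> (forall i, (i < k)%nat -> 0 <= u i <= 1) ->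
  exists u', In u' (grid N k) /\ forall i, (i < k)%nat -> Rabs (u i - u' i) <= 1 / INR N.
Proof. intros HN. induction k; intros Hu.
  - exists (fun _ => 0). simpl. split; auto. intros; lia.
  - destruct IHk as [u' [Hin Hu']]. intros; apply Hu; lia.
    destruct (round01 N (u k) HN (Hu k ltac:(lia))) as [j [Hj Hjx]].
    exists (fun i => if Nat.eqb i k then INR j / INR N else u' i). split.
    + cbn [grid]. apply in_flat_map. exists u'. split; auto. apply in_map_iff. exists j. split; auto.
      apply in_seq. lia.
    + intros i Hi. destruct (Nat.eqb_spec i k). subst; auto. apply Hu'. lia.
Qed.

Definition tgrid (N : nat) : list R := map (fun j => INR j / INR N) (seq 0 (S N)).
Lemma tgrid_approx N t : (0 < N)%nat -> 0 <= t <= 1 -> exists t', In t' (tgrid N) /\ Rabs (t - t') <= 1 / INR N.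
Proof. intros HN Ht. destruct (round01 N t HN Ht) as [j [Hj Hjx]]. exists (INR j / INR N). split; auto.
  apply in_map_iff. exists j. split; auto. apply in_seq. lia. Qed.
Definition glb (E : R -> Prop) : R := - lubR (fun v => E (-v)).
Lemma glb_le (E : R -> Prop) v : (exists b, forall w, E w -> b <= w) -> E v -> glb E <= v.
Proof. intros [b Hb] Hv. unfold glb.
  destruct (lubR_spec (fun v => E (-v))) as [H1 _].
  - exists (-b). intros w Hw. specialize (Hb _ Hw). lra.
  - exists (-v). rewrite Ropp_involutive. auto.
  - assert (-v <= lubR (fun v => E (-v))); [|lra]. apply H1. rewrite Ropp_involutive; auto. Qed.
Lemma glb_ge (E : R -> Prop) a : (exists v, E v) -> (forall v, E v -> a <= v) -> a <= glb E.
Proof. intros [v Hv] Hb. unfold glb.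
  destruct (lubR_spec (fun v => E (-v))) as [_ H2].
  - exists (-a). intros w Hw. specialize (Hb _ Hw). lra.
  - exists (-v). rewrite Ropp_involutive. auto.
  - assert (lubR (fun v => E (-v)) <= -a); [|lra]. apply H2. intros w Hw. specialize (Hb _ Hw). lra. Qed.

Definition Sset {X Y : Top} (f : X -> Y) (mu : C Y -> R) (Phi : nat -> C X) (n : nat) (p : nat -> R)
  (phi : X -> R) (v : R) : Prop :=
  exists (psi : C Y) (c : nat -> R), (forall i, (i < n)%nat -> 0 <= c i) /\
    (forall x, phi x <= psi (f x) + gf Phi n c x) /\ v = mu psi + sumR n (fun i => c i * p i).

Definition nuP {X Y : Top} (f : X -> Y) (mu : C Y -> R) (Phi : nat -> C X) (n : nat) (p : nat -> R)
  (phi : C X) : R := glb (Sset f mu Phi n p phi).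

Definition KeyH {X Y : Top} (f : X -> Y) (mu : C Y -> R) (Phi : nat -> C X) (n : nat) (p : nat -> R) :=
  forall (psi0 psi : C Y) (c : nat -> R), (forall i, (i < n)%nat -> 0 <= c i) ->
    (forall x, psi0 (f x) <= psi (f x) + gf Phi n c x) -> mu psi0 <= mu psi + sumR n (fun i => c i * p i).

Lemma gf_zero {X:Top} (Phi : nat -> C X) n x : gf Phi n (fun _ => 0) x = 0.
Proof. unfold gf. rewrite (sumR_ext n _ (fun _ => 0)). rewrite sumR_const. ring. intros; ring. Qed.
Lemma price_zero n (p : nat -> R) : sumR n (fun i => 0 * p i) = 0.
Proof. rewrite (sumR_ext n _ (fun _ => 0)). rewrite sumR_const. ring. intros; ring. Qed.


Lemma S_lbt {X Y : Top} (f : X -> Y) mu Phi n p (HK : KeyH f mu Phi n p) (Hmu : in_OS mu)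
  (phi : X -> R) t v : (forall x, t <= phi x) -> Sset f mu Phi n p phi v -> t <= v.
Proof. intros Ht [psi [c [Hc [Hx ->]]]].
  rewrite <- (os_const Y mu Hmu t). apply HK; auto. intros x. rewrite cconst_eq.
  specialize (Ht x). specialize (Hx x). lra. Qed.

Lemma S_lb {X Y : Top} (f : X -> Y) mu Phi n p (HK : KeyH f mu Phi n p) (Hmu : in_OS mu)
  (hX : top_compact X) (phi : C X) : exists b, forall v, Sset f mu Phi n p phi v -> b <= v.
Proof. destruct (C_bounded X hX phi) as [B HB]. exists (-B). intros v Hv.
  apply (S_lbt f mu Phi n p HK Hmu phi); auto. intros x. pose proof (abs_le_split _ _ (HB x)). lra. Qed.

Lemma S_ubt {X Y : Top} (f : X -> Y) mu Phi n p (Hmu : in_OS mu) (phi : X -> R) t :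
  (forall x, phi x <= t) -> Sset f mu Phi n p phi t.
Proof. intros Ht. exists (cconst Y t), (fun _ => 0). split. intros; lra. split.
  intros x. rewrite gf_zero, cconst_eq. specialize (Ht x). lra.
  rewrite price_zero, (os_const Y mu Hmu). ring. Qed.

Lemma S_ne {X Y : Top} (f : X -> Y) mu Phi n p (Hmu : in_OS mu)
  (hX : top_compact X) (phi : C X) : exists v, Sset f mu Phi n p phi v.
Proof. destruct (C_bounded X hX phi) as [B HB]. exists B. apply S_ubt; auto.
  intros x. pose proof (abs_le_split _ _ (HB x)). lra. Qed.
Lemma gf_scal {X:Top} (Phi : nat -> C X) n t c x : gf Phi n (fun i => t * c i) x = t * gf Phi n c x.
Proof. unfold gf. rewrite <- sumR_scal. apply sumR_ext. intros; ring. Qed.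
Lemma gf_add {X:Top} (Phi : nat -> C X) n c1 c2 x : gf Phi n (fun i => c1 i + c2 i) x = gf Phi n c1 x + gf Phi n c2 x.
Proof. unfold gf. rewrite <- sumR_add. apply sumR_ext. intros; ring. Qed.
Lemma pr_scal n t (c p : nat -> R) : sumR n (fun i => (t * c i) * p i) = t * sumR n (fun i => c i * p i).
Proof. rewrite <- sumR_scal. apply sumR_ext. intros; ring. Qed.
Lemma pr_add n (c1 c2 p : nat -> R) : sumR n (fun i => (c1 i + c2 i) * p i) = sumR n (fun i => c1 i * p i) + sumR n (fun i => c2 i * p i).
Proof. rewrite <- sumR_add. apply sumR_ext. intros; ring. Qed.

Lemma nuP_OS {X Y : Top} (f : X -> Y) mu Phi n p (HK : KeyH f mu Phi n p) (Hmu : in_OS mu)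
  (hX : top_compact X) : in_OS (nuP f mu Phi n p).
Proof.
  assert (Hle : forall (phi : C X) v, Sset f mu Phi n p phi v -> nuP f mu Phi n p phi <= v).
  { intros phi v Hv. apply glb_le; auto. apply S_lb; auto. }
  assert (Hge : forall (phi : C X) a, (forall v, Sset f mu Phi n p phi v -> a <= v) -> a <= nuP f mu Phi n p phi).
  { intros phi a Ha. apply glb_ge; auto. apply S_ne; auto. }
  assert (HV : in_V (nuP f mu Phi n p)).
  { intros phi. split.
    - intros t Ht. apply Hge. intros v Hv. apply (S_lbt f mu Phi n p HK Hmu phi); auto.
    - intros t Ht. apply Hle. apply S_ubt; auto. }
  assert (Hshift : forall (a b : C X) s, (forall x, b x = a x + s) -> nuP f mu Phi n p b <= nuP f mu Phi n p a + s).
  { intros a b s Hb. assert (nuP f mu Phi n p b - s <= nuP f mu Phi n p a); [|lra].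
    apply Hge. intros v [psi [c [Hc [Hx ->]]]].
    assert (nuP f mu Phi n p b <= mu (cadd psi (cconst Y s)) + sumR n (fun i => c i * p i)).
    { apply Hle. exists (cadd psi (cconst Y s)), c. split; auto. split; auto.
      intros x. rewrite Hb, cadd_eq, cconst_eq. specialize (Hx x). lra. }
    rewrite (os_shift Y mu Hmu psi (cadd psi (cconst Y s)) s) in H by (intros; rewrite cadd_eq, cconst_eq; auto).
    lra. }
  assert (Hscale : forall (a b : C X) t, 0 < t -> (forall x, b x = t * a x) -> nuP f mu Phi n p b <= t * nuP f mu Phi n p a).
  { intros a b t Ht Hb. assert (nuP f mu Phi n p b / t <= nuP f mu Phi n p a).
    2: { apply Rmult_le_reg_r with (/t). apply Rinv_0_lt_compat; auto.
         replace (t * nuP f mu Phi n p a * / t) with (nuP f mu Phi n p a) by (field; lra). exact H. }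
    apply Hge. intros v [psi [c [Hc [Hx ->]]]].
    assert (nuP f mu Phi n p b <= mu (cscale t psi) + sumR n (fun i => (t * c i) * p i)).
    { apply Hle. exists (cscale t psi), (fun i => t * c i). split. intros i Hi. specialize (Hc i Hi). nra. split; auto.
      intros x. rewrite Hb, cscale_eq, gf_scal. specialize (Hx x). nra. }
    rewrite (os_hom Y mu Hmu psi (cscale t psi) t) in H by (try lra; intros; rewrite cscale_eq; auto).
    rewrite pr_scal in H. apply Rmult_le_reg_r with t; auto. unfold Rdiv. rewrite Rmult_assoc, Rinv_l by lra. lra. }
  assert (Hmono : forall a b : C X, (forall x, a x <= b x) -> nuP f mu Phi n p a <= nuP f mu Phi n p b).
  { intros a b Hab. apply Hge. intros v [psi [c [Hc [Hx ->]]]]. apply Hle. exists psi, c. split; auto. split; auto.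
    intros x. specialize (Hab x). specialize (Hx x). lra. }
  split; [exact HV|]. split; [|split; [|split; [exact Hmono|split]]].
  - intros one Hone. destruct (HV one) as [H1 H2]. apply Rle_antisym.
    apply H2. intros; rewrite Hone; lra. apply H1. intros; rewrite Hone; lra.
  - intros a b s Hb. apply Rle_antisym. apply Hshift; auto.
    assert (nuP f mu Phi n p a <= nuP f mu Phi n p b + - s); [|lra]. apply Hshift. intros x; rewrite Hb; ring.
  - intros a b t Ht Hb. destruct (Rle_lt_or_eq_dec 0 t Ht) as [Ht'|<-].
    + apply Rle_antisym. apply Hscale; auto.
      assert (nuP f mu Phi n p a <= / t * nuP f mu Phi n p b).
      { apply Hscale. apply Rinv_0_lt_compat; auto. intros x. rewrite Hb. field. lra. }
      apply Rmult_le_reg_l with (/t). apply Rinv_0_lt_compat; auto.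
      replace (/ t * (t * nuP f mu Phi n p a)) with (nuP f mu Phi n p a) by (field; lra). exact H.
    + rewrite Rmult_0_l. destruct (HV b) as [H1 H2]. apply Rle_antisym.
      apply H2. intros; rewrite Hb; lra. apply H1. intros; rewrite Hb; lra.
  - intros a b ch Hch.
    assert (forall v2, Sset f mu Phi n p b v2 -> nuP f mu Phi n p ch - v2 <= nuP f mu Phi n p a).
    { intros v2 [psi2 [c2 [Hc2 [Hx2 ->]]]]. apply Hge. intros v1 [psi1 [c1 [Hc1 [Hx1 ->]]]].
      assert (nuP f mu Phi n p ch <= mu (cadd psi1 psi2) + sumR n (fun i => (c1 i + c2 i) * p i)).
      { apply Hle. exists (cadd psi1 psi2), (fun i => c1 i + c2 i). split.
        intros i Hi. specialize (Hc1 i Hi). specialize (Hc2 i Hi). lra. split; auto.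
        intros x. rewrite Hch, cadd_eq, gf_add. specialize (Hx1 x). specialize (Hx2 x). lra. }
      rewrite pr_add in H. destruct Hmu as [_ [_ [_ [_ [_ Hs]]]]].
      pose proof (Hs psi1 psi2 (cadd psi1 psi2) (fun x => cadd_eq Y psi1 psi2 x)). lra. }
    assert (nuP f mu Phi n p ch - nuP f mu Phi n p a <= nuP f mu Phi n p b); [|lra].
    apply Hge. intros v Hv. specialize (H v Hv). lra.
Qed.

Lemma nuP_comp {X Y : Top} (f : X -> Y) (hf : top_continuous f) mu Phi n p (HK : KeyH f mu Phi n p)
  (Hmu : in_OS mu) (hX : top_compact X) (psi0 : C Y) :
  nuP f mu Phi n p (Ccomp f hf psi0) = mu psi0.
Proof. apply Rle_antisym.
  - apply glb_le. apply S_lb; auto. exists psi0, (fun _ => 0). split. intros; lra. split.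
    intros x. rewrite gf_zero. simpl. lra. rewrite price_zero. ring.
  - apply glb_ge. apply S_ne; auto. intros v [psi [c [Hc [Hx ->]]]]. apply HK; auto.
Qed.

Lemma nuP_upper {X Y : Top} (f : X -> Y) mu Phi n p (HK : KeyH f mu Phi n p)
  (Hmu : in_OS mu) (hX : top_compact X) i : (i < n)%nat -> nuP f mu Phi n p (Phi i) <= p i.
Proof. intros Hi. apply glb_le. apply S_lb; auto.
  exists (cconst Y 0), (fun j => if Nat.eqb j i then 1 else 0). split.
  intros j _. destruct (Nat.eqb j i); lra. split.
  intros x. rewrite cconst_eq. unfold gf. rewrite sumR_delta by auto. lra.
  rewrite sumR_delta by auto. rewrite (os_const Y mu Hmu). ring. Qed.
Lemma gf_div {X:Top} (Phi : nat -> C X) n (c : nat -> R) s x : 0 < s ->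
  gf Phi n c x = s * gf Phi n (fun i => c i / s) x.
Proof. intros Hs. rewrite <- gf_scal. unfold gf. apply sumR_ext. intros. field. lra. Qed.
Lemma pr_div n (c q : nat -> R) s : 0 < s ->
  sumR n (fun i => c i * q i) = s * sumR n (fun i => c i / s * q i).
Proof. intros Hs. rewrite <- sumR_scal. apply sumR_ext. intros. field. lra. Qed.
Lemma pr_split n (c q : nat -> R) e :
  sumR n (fun i => c i * (q i + e)) = sumR n (fun i => c i * q i) + e * sumR n c.
Proof. rewrite <- sumR_scal, <- sumR_add. apply sumR_ext. intros; ring. Qed.

Lemma key_from_U {X Y : Top} (f : X -> Y) (G : good f) (hf : top_continuous f)
  (mu : C Y -> R) (nu : C X -> R) (Phi : nat -> C X) (n : nat) (eps : R)
  (Hmu : in_OS mu) (Hnu : in_OS nu) (Heps : 0 < eps)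
  (HU : forall u, (forall i, (i < n)%nat -> 0 <= u i <= 1) ->
     mu (fibminC G (gC Phi n u)) <= nu (Ccomp f hf (fibminC G (gC Phi n u))) + eps) :
  KeyH f mu Phi n (fun i => nu (Phi i) + eps).
Proof.
  intros psi0 psi c Hc Hx.
  set (S := sumR n c). assert (HS : 0 <= S) by (apply sumR_nonneg; auto).
  set (Q := sumR n (fun i => c i * nu (Phi i))).
  assert (Hs : forall s, S < s -> mu psi0 <= mu psi + Q + eps * s).
  { intros s Hs. assert (Hs0 : 0 < s) by lra.
    set (u := fun i => c i / s).
    assert (Hu : forall i, (i < n)%nat -> 0 <= u i <= 1).
    { intros i Hi. unfold u. pose proof (sumR_elem n c i Hc Hi). fold S in H. pose proof (Hc i Hi).
      split. apply Rmult_le_pos; auto. left; apply Rinv_0_lt_compat; auto.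
      apply Rmult_le_reg_r with s; auto. unfold Rdiv. rewrite Rmult_assoc, Rinv_l by lra. lra. }
    set (Hmin := fibminC G (gC Phi n u)).
    assert (Hpw : forall y, psi0 y <= psi y + cscale s Hmin y).
    { intros y. rewrite cscale_eq.
      assert ((psi0 y - psi y) / s <= Hmin y).
      { apply fibminC_ge. intros x Hfx. rewrite gC_eq. specialize (Hx x). rewrite Hfx in Hx.
        rewrite (gf_div Phi n c s x Hs0) in Hx. fold u in Hx.
        apply Rmult_le_reg_r with s; auto. unfold Rdiv. rewrite Rmult_assoc, Rinv_l by lra. lra. }
      apply Rmult_le_compat_l with (r := s) in H; [|lra].
      replace (s * ((psi0 y - psi y) / s)) with (psi0 y - psi y) in H by (field; lra). lra. }
    pose proof (os_le_add Y mu Hmu psi0 psi (cscale s Hmin) Hpw) as H1.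
    rewrite (os_hom Y mu Hmu Hmin (cscale s Hmin) s) in H1 by (try lra; intros; rewrite cscale_eq; auto).
    pose proof (HU u Hu) as H2. fold Hmin in H2.
    assert (H3 : nu (Ccomp f hf Hmin) <= nu (gC Phi n u)).
    { apply (os_mono X nu Hnu). intros x. exact (fibminC_le f G (gC Phi n u) x). }
    pose proof (nu_gC X nu Phi n u Hnu (fun i Hi => proj1 (Hu i Hi))) as H4.
    assert (H5 : Q = s * sumR n (fun i => u i * nu (Phi i))) by (apply pr_div; auto).
    assert (mu Hmin <= sumR n (fun i => u i * nu (Phi i)) + eps) by lra.
    apply Rmult_le_compat_l with (r := s) in H; [|lra]. nra. }
  rewrite pr_split. fold Q S.
  destruct (Rle_or_lt (mu psi0) (mu psi + Q + eps * S)) as [H|H]; [lra|exfalso].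
  set (d := mu psi0 - (mu psi + Q + eps * S)).
  specialize (Hs (S + d / (2 * eps))).
  assert (0 < d / (2 * eps)) by (apply Rdiv_lt_0_compat; unfold d; lra).
  assert (eps * (S + d / (2 * eps)) = eps * S + d / 2) by (field; lra).
  assert (mu psi0 <= mu psi + Q + eps * (S + d / (2 * eps))) by (apply Hs; lra).
  unfold d in *. lra.
Qed.

Definition HLC {X Y : Top} {f : X -> Y} (G : good f) (Phi : nat -> C X) n k t u : C Y :=
  fibmaxC G (cadd (cscale t (Phi k)) (cscale (-1) (gC Phi n u))).

Lemma lower_from_L {X Y : Top} (f : X -> Y) (G : good f) (hf : top_continuous f)
  (mu : C Y -> R) (nu : C X -> R) (Phi : nat -> C X) (n : nat) (eps : R)
  (Hmu : in_OS mu) (Hnu : in_OS nu) (Heps : 0 < eps) (hX : top_compact X)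
  (HK : KeyH f mu Phi n (fun i => nu (Phi i) + eps))
  (HL : forall k t u, (k < n)%nat -> 0 <= t <= 1 -> (forall i, (i < n)%nat -> 0 <= u i <= 1) ->
     nu (Ccomp f hf (HLC G Phi n k t u)) - eps <= mu (HLC G Phi n k t u)) :
  forall k, (k < n)%nat -> nu (Phi k) - eps <= nuP f mu Phi n (fun i => nu (Phi i) + eps) (Phi k).
Proof.
  intros k Hk. apply glb_ge. apply S_ne; auto. intros v [psi [c [Hc [Hx ->]]]].
  set (S := sumR n c). assert (HS : 0 <= S) by (apply sumR_nonneg; auto).
  set (Q := sumR n (fun i => c i * nu (Phi i))).
  rewrite pr_split. fold Q S.
  set (s := 1 + S). assert (Hs0 : 0 < s) by (unfold s; lra).
  set (t := 1 / s). set (u := fun i => c i / s).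
  assert (Ht : 0 <= t <= 1).
  { unfold t. split. left. apply Rdiv_lt_0_compat; lra.
    apply Rmult_le_reg_r with s; auto. unfold Rdiv. rewrite Rmult_assoc, Rinv_l by lra. unfold s; lra. }
  assert (Hu : forall i, (i < n)%nat -> 0 <= u i <= 1).
  { intros i Hi. unfold u. pose proof (sumR_elem n c i Hc Hi). fold S in H. pose proof (Hc i Hi).
    split. apply Rmult_le_pos; auto. left; apply Rinv_0_lt_compat; auto.
    apply Rmult_le_reg_r with s; auto. unfold Rdiv. rewrite Rmult_assoc, Rinv_l by lra. unfold s. lra. }
  set (H := HLC G Phi n k t u).
  assert (Hpw : forall y, H y <= cscale (1/s) psi y).
  { intros y. rewrite cscale_eq. apply fibmaxC_le. intros x Hfx. rewrite cadd_eq, !cscale_eq, gC_eq.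
    specialize (Hx x). rewrite Hfx in Hx. rewrite (gf_div Phi n c s x Hs0) in Hx. fold u in Hx.
    unfold t. apply Rmult_le_reg_r with s; auto.
    replace ((1 / s * Phi k x + -1 * gf Phi n u x) * s) with (Phi k x - s * gf Phi n u x) by (field; lra).
    replace (1 / s * psi y * s) with (psi y) by (field; lra). lra. }
  assert (H1 : mu psi = s * mu (cscale (1/s) psi)).
  { apply (os_hom Y mu Hmu); [lra|]. intros y. rewrite cscale_eq. field. lra. }
  pose proof (os_mono Y mu Hmu H (cscale (1/s) psi) Hpw) as H2.
  pose proof (HL k t u Hk Ht Hu) as H3. fold H in H3.
  set (arg := cadd (cscale t (Phi k)) (cscale (-1) (gC Phi n u))).
  assert (H4 : nu arg <= nu (Ccomp f hf H)).
  { apply (os_mono X nu Hnu). intros x. exact (fibmaxC_ge f G arg x). }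
  assert (H5 : nu (cscale t (Phi k)) <= nu arg + nu (gC Phi n u)).
  { apply (os_le_add X nu Hnu). intros x. unfold arg. rewrite cadd_eq, !cscale_eq, gC_eq. lra. }
  rewrite (os_hom X nu Hnu (Phi k) (cscale t (Phi k)) t) in H5 by (try lra; intros; rewrite cscale_eq; auto).
  pose proof (nu_gC X nu Phi n u Hnu (fun i Hi => proj1 (Hu i Hi))) as H6.
  assert (H7 : Q = s * sumR n (fun i => u i * nu (Phi i))) by (apply pr_div; auto).
  assert (H8 : s * t = 1) by (unfold t; field; lra).
  set (B := sumR n (fun i => u i * nu (Phi i))) in *.
  assert (t * nu (Phi k) - B - eps <= mu (cscale (1/s) psi)) by lra.
  apply Rmult_le_compat_l with (r := s) in H0; [|lra].
  replace (s * (t * nu (Phi k) - B - eps)) with (nu (Phi k) - Q - eps * s) in H0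
    by (rewrite H7; replace (s * (t * nu (Phi k) - B - eps)) with ((s*t) * nu (Phi k) - s * B - s * eps) by ring; rewrite H8; ring).
  assert (eps * s = eps + eps * S) by (unfold s; ring). lra.
Qed.
Lemma approx_test {X Y : Top} (f : X -> Y) (hf : top_continuous f) (mu : C Y -> R) (nu : C X -> R)
  (Hmu : in_OS mu) (Hnu : in_OS nu) (A A' : C Y) eta delta :
  (forall y, Rabs (A y - A' y) <= eta) -> Rabs (mu A' - nu (Ccomp f hf A')) < delta ->
  Rabs (mu A - nu (Ccomp f hf A)) <= delta + 2 * eta.
Proof. intros H1 H2.
  pose proof (os_lip Y mu Hmu A A' eta H1).
  pose proof (os_lip X nu Hnu (Ccomp f hf A) (Ccomp f hf A') eta (fun x => H1 (f x))).
  apply abs_le_split in H. apply abs_le_split in H0. apply Rabs_def2 in H2. apply Rabs_le. lra. Qed.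

Lemma sumR_sub n F G : sumR n F - sumR n G = sumR n (fun i => F i - G i).
Proof. induction n; simpl. ring. rewrite <- IHn. ring. Qed.

Lemma gf_diff {X:Top} (Phi : nat -> C X) n u u' a M x : 0 <= a -> 0 <= M ->
  (forall i, (i < n)%nat -> Rabs (u i - u' i) <= a) -> (forall i, (i < n)%nat -> Rabs (Phi i x) <= M) ->
  Rabs (gf Phi n u x - gf Phi n u' x) <= INR n * (a * M).
Proof. intros Ha HM Hu HP. unfold gf. rewrite sumR_sub.
  eapply Rle_trans. apply sumR_abs. rewrite <- sumR_const. apply sumR_le. intros i Hi.
  replace (u i * Phi i x - u' i * Phi i x) with ((u i - u' i) * Phi i x) by ring.
  rewrite Rabs_mult. apply Rmult_le_compat; auto using Rabs_pos. Qed.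

Lemma eps_exists {A : Type} (l : list (A * R)) : (forall p, In p l -> 0 < snd p) ->
  exists e, 0 < e /\ forall p, In p l -> e < snd p.
Proof. induction l as [|a l IH]; intros H.
  - exists 1. split. lra. simpl; tauto.
  - destruct IH as [e [He Hl]]. intros; apply H; simpl; auto.
    pose proof (H a (or_introl eq_refl)).
    exists (Rmin e (snd a / 2)). split. apply Rmin_glb_lt; lra.
    intros p [Hp|Hp]. subst p. pose proof (Rmin_r e (snd a / 2)). lra.
    pose proof (Rmin_l e (snd a / 2)). specialize (Hl p Hp). lra. Qed.

Lemma M_exists (X : Top) (hX : top_compact X) (Phi : nat -> C X) n :
  exists M, 0 < M /\ forall i, (i < n)%nat -> forall x, Rabs (Phi i x) <= M.
Proof. induction n.
  - exists 1. split. lra. intros; lia.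
  - destruct IHn as [M [HM HMi]]. destruct (C_bounded X hX (Phi n)) as [B HB].
    exists (Rmax M B). split. pose proof (Rmax_l M B). lra.
    intros i Hi x. destruct (Nat.eq_dec i n) as [->|E].
    + pose proof (Rmax_r M B). pose proof (HB x). lra.
    + pose proof (Rmax_l M B). pose proof (HMi i ltac:(lia) x). lra. Qed.

Theorem proposition2 (X Y : Top) (f : X -> Y)
  (hX : top_compact X) (hXH : top_hausdorff X) (hY : top_compact Y) (hYH : top_hausdorff Y)
  (hf : top_continuous f) (hopen : open_map f) (hsurj : top_surjective f) :
  OS_open_map f hf.
Proof.
  assert (G : good f) by (repeat split; auto).
  intros W HW mu0 Hmu0 [nu [Hnu [HWnu ->]]].
  destruct (HW nu Hnu HWnu) as [l [Hpos Hl]].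
  set (n := length l). set (d := (cconst X 0, 1)).
  set (Phi := fun i => fst (nth i l d)).
  destruct (eps_exists l Hpos) as [eps [Heps Hepsl]].
  destruct (M_exists X hX Phi n) as [M [HM HMb]].
  destruct (archimed_cor1 (eps / (4 * ((INR n + 1) * M)))) as [N [HN HN0]].
  { apply Rdiv_lt_0_compat. lra. pose proof (pos_INR n). nra. }
  set (eta := (INR n + 1) * (1 / INR N * M)).
  assert (HNr : 0 < INR N) by (apply lt_0_INR; auto).
  assert (Heta : 0 <= eta /\ eta <= eps / 4).
  { unfold eta. pose proof (pos_INR n). split.
    - apply Rmult_le_pos. lra. apply Rmult_le_pos; [|lra]. left. apply Rdiv_lt_0_compat; lra.
    - set (K := (INR n + 1) * M) in *. assert (0 < K) by (unfold K; nra).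
      replace ((INR n + 1) * (1 / INR N * M)) with (K * / INR N) by (unfold K; field; lra).
      apply Rmult_lt_compat_l with (r := K) in HN; auto.
      replace (K * (eps / (4 * K))) with (eps / 4) in HN by (field; lra). lra. }
  set (delta := eps / 2).
  set (Psi := map (fun u => fibminC G (gC Phi n u)) (grid N n) ++
              flat_map (fun k => flat_map (fun t => map (fun u => HLC G Phi n k t u) (grid N n)) (tgrid N)) (seq 0 n)).
  exists (map (fun psi => (psi, delta)) Psi). split.
  { intros p Hp. apply in_map_iff in Hp. destruct Hp as [psi [<- _]]. simpl. unfold delta. lra. }
  intros mu Hmu Htest.
  assert (Ht : forall psi, In psi Psi -> Rabs (mu psi - nu (Ccomp f hf psi)) < delta).
  { intros psi Hpsi. apply (Htest (psi, delta)). apply in_map_iff. exists psi. auto. }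
  assert (HU : forall u, (forall i, (i < n)%nat -> 0 <= u i <= 1) ->
     mu (fibminC G (gC Phi n u)) <= nu (Ccomp f hf (fibminC G (gC Phi n u))) + eps).
  { intros u Hu. destruct (grid_approx N n u HN0 Hu) as [u' [Hin Hu']].
    assert (Hlip : forall y, Rabs (fibminC G (gC Phi n u) y - fibminC G (gC Phi n u') y) <= eta).
    { apply fibminC_lip. intros x. rewrite !gC_eq.
      assert (Hp : 0 <= 1 / INR N) by (left; apply Rdiv_lt_0_compat; lra).
      eapply Rle_trans. apply (gf_diff Phi n u u' (1 / INR N) M x Hp ltac:(lra) Hu' (fun i Hi => HMb i Hi x)).
      unfold eta. pose proof (pos_INR n). assert (0 <= 1 / INR N * M).
      { apply Rmult_le_pos; [|lra]. left. apply Rdiv_lt_0_compat; lra. } nra. }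
    pose proof (approx_test f hf mu nu Hmu Hnu _ _ eta delta Hlip) as H.
    assert (Rabs (mu (fibminC G (gC Phi n u')) - nu (Ccomp f hf (fibminC G (gC Phi n u')))) < delta).
    { apply Ht. apply in_or_app. left. apply in_map_iff. exists u'. auto. }
    specialize (H H0). apply abs_le_split in H. unfold delta in H. lra. }
  assert (HL : forall k t u, (k < n)%nat -> 0 <= t <= 1 -> (forall i, (i < n)%nat -> 0 <= u i <= 1) ->
     nu (Ccomp f hf (HLC G Phi n k t u)) - eps <= mu (HLC G Phi n k t u)).
  { intros k t u Hk Htt Hu. destruct (grid_approx N n u HN0 Hu) as [u' [Hin Hu']].
    destruct (tgrid_approx N t HN0 Htt) as [t' [Hint Ht']].
    assert (Hlip : forall y, Rabs (HLC G Phi n k t u y - HLC G Phi n k t' u' y) <= eta).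
    { apply fibmaxC_lip. intros x. rewrite !cadd_eq, !cscale_eq, !gC_eq.
      pose proof (gf_diff Phi n u u' (1 / INR N) M x) as Hg.
      assert (0 <= 1 / INR N) by (left; apply Rdiv_lt_0_compat; lra).
      specialize (Hg H ltac:(lra) Hu' (fun i Hi => HMb i Hi x)).
      replace (t * Phi k x + -1 * gf Phi n u x - (t' * Phi k x + -1 * gf Phi n u' x))
        with ((t - t') * Phi k x - (gf Phi n u x - gf Phi n u' x)) by ring.
      eapply Rle_trans. apply Rabs_triang. rewrite Rabs_Ropp, Rabs_mult.
      assert (Rabs (t - t') * Rabs (Phi k x) <= 1 / INR N * M).
      { apply Rmult_le_compat; auto using Rabs_pos. }
      unfold eta. lra. }
    pose proof (approx_test f hf mu nu Hmu Hnu _ _ eta delta Hlip) as H.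
    assert (Rabs (mu (HLC G Phi n k t' u') - nu (Ccomp f hf (HLC G Phi n k t' u'))) < delta).
    { apply Ht. apply in_or_app. right. apply in_flat_map. exists k. split. apply in_seq. lia.
      apply in_flat_map. exists t'. split; auto. apply in_map_iff. exists u'. auto. }
    specialize (H H0). apply abs_le_split in H. unfold delta in H. lra. }
  assert (HK := key_from_U f G hf mu nu Phi n eps Hmu Hnu Heps HU).
  exists (nuP f mu Phi n (fun i => nu (Phi i) + eps)).
  assert (HOS := nuP_OS f mu Phi n _ HK Hmu hX).
  split; [exact HOS|]. split.
  - apply Hl; auto. intros p Hp. destruct (In_nth l p d Hp) as [i [Hi Hpi]].
    pose proof (Hepsl p Hp). subst p.
    pose proof (nuP_upper f mu Phi n _ HK Hmu hX i Hi).
    pose proof (lower_from_L f G hf mu nu Phi n eps Hmu Hnu Heps hX HK HL i Hi).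
    unfold Phi in *. apply Rabs_def1; lra.
  - extensionality psi. unfold OSmap. symmetry. apply nuP_comp; auto.
Qed.
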